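(* Let $T$ be a non-star tree containing an edge $xy$ with $d_T(x)=1$ and $d_T(y)\ge 3$. Suppose that for every neighbor $y'\ne x$ of $y$, the tree $T_{(y',y)}$ is a neighbor $F$-tree of $y$ which is not a single vertex (i.e. not isomorphic to $P_1$). Then there exists a $(T,x)$-well 2-placement.
   Context: All graphs are finite, simple and undirected; $P_k$ is the path on $k$ vertices. A non-star tree is a tree not isomorphic to a star $K_{1,m}$ for any $m\ge0$. For an edge $ab$ of a tree $T$, $T_{(a,b)}$ denotes the connected component containing $a$ in $T-\{ab\}$; it is a neighbor $F$-tree of $b$ if it is a path with at most $3$ vertices and, when it has exactly $3$ vertices, $a$ is an end vertex of it. A permutation $\sigma$ of $V(T)$ is a 2-placement of $T$ if $\sigma(a)\sigma(b)\notin E(T)$ for every edge $ab\in E(T)$; $\sigma(T)\subseteq T^k$ means $dist_T(\sigma(a),\sigma(b))\le k$ for every edge $ab$ of $T$. A fixed-point-free permutation $\sigma$ of $V(T)$ is a $(T,x)$-well 2-placement if (distances and degrees in $T$): (1) $\sigma$ is a 2-placement of $T$; (2) $\sigma(T)\subseteq T^6$; (3) $dist(x,\sigma(x))\le 2$; (4) $dist(w,\sigma(w))\le 3$ for every neighbor $w$ of $x$; (5) $dist(w,\sigma(w))\le 4$ for every $w$ of degree $1$; (6) every cycle of $\sigma$ (in its disjoint cycle decomposition) has length at most $5$. *)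

(* Defs.v *)
From mathcomp Require Import all_boot fingroup perm.
Set Implicit Arguments. Unset Strict Implicit. Unset Printing Implicit Defensive.

Section Graphs.
Variable T : finType.
Implicit Types (e : rel T) (x y a b u v w : T).

Definition simple_graph e := symmetric e /\ irreflexive e.

Definition connected_graph e := forall x y, connect e x y.

Definition acyclic_graph e :=
  forall c : seq T, uniq c -> 3 <= size c -> ~~ path.cycle e c.

Definition is_tree e := [/\ simple_graph e, connected_graph e & acyclic_graph e].

Definition deg e x := #|[set z | e x z]|.

(* the star K_{1,m} on 'I_m.+1 with centre ord0 *)
Definition star_edge m (i j : 'I_m.+1) := (i == ord0) != (j == ord0).

Definition is_star e :=
  exists m (f : T -> 'I_m.+1), bijective f /\ forall u v, e u v = star_edge (f u) (f v).

Definition remove_edge e a b : rel T :=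
  fun u v => e u v && ~~ (((u == a) && (v == b)) || ((u == b) && (v == a))).

Definition subtree e a b : {set T} := [set v | connect (remove_edge e a b) a v].

Definition adj_in (s : seq T) u v :=
  ((u, v) \in zip s (behead s)) || ((v, u) \in zip s (behead s)).

(* T_(a,b) is a path (listed in order by s) with at most 3 vertices, and
   if it has exactly 3 vertices then a is an end vertex *)
Definition neighbor_F_tree e a b :=
  exists s : seq T,
    [/\ uniq s, s =i subtree e a b,
        {in s &, forall u v, e u v = adj_in s u v},
        size s <= 3
      & size s = 3 -> a = head a s \/ a = last a s].

Fixpoint walkn e n x y : bool :=
  if n is n'.+1 then (x == y) || [exists z, e x z && walkn e n' z y] else x == y.

(* graph distance (for connected graphs, the least n with a walk of length n) *)
Definition dist e x y := find (fun n => walkn e n x y) (iota 0 #|T|).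

Definition two_placement e (s : {perm T}) :=
  forall a b, e a b -> ~~ e (s a) (s b).

Definition well_two_placement e x (s : {perm T}) :=
  (forall v, s v != v) /\
  two_placement e s /\
  (forall a b, e a b -> dist e (s a) (s b) <= 6) /\
  dist e x (s x) <= 2 /\
  (forall w, e x w -> dist e w (s w) <= 3) /\
  (forall w, deg e w = 1 -> dist e w (s w) <= 4) /\
  (forall v, #|porbit s v| <= 5).

End Graphs.

(* Main.v *)
Require Import Defs.
From mathcomp Require Import all_boot fingroup perm zify.
Set Implicit Arguments. Unset Strict Implicit. Unset Printing Implicit Defensive.


Lemma walkn_mono (T : finType) (e : rel T) n m u v :
  n <= m -> walkn e n u v -> walkn e m u v.
Proof.
elim: n m u => [|n IH] [|m] u //=.
- move=> _ ->; by [].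
- rewrite ltnS => le /orP[->//|/existsP[z /andP[ez w]]].
  apply/orP; right; apply/existsP; exists z; rewrite ez; exact: IH w.
Qed.

Lemma walkn_cat (T : finType) (e : rel T) n m u v w :
  walkn e n u v -> walkn e m v w -> walkn e (n + m) u w.
Proof.
elim: n u => [|n IH] u /=; first by move/eqP->.
case/orP=> [/eqP-> h|/existsP[z /andP[ez hz]] h].
  by change (walkn e (n.+1 + m) v w); apply: (walkn_mono _ h); rewrite leq_addl.
apply/orP; right; apply/existsP; exists z; rewrite ez; exact: IH h.
Qed.

Lemma walkn_edge (T : finType) (e : rel T) u v : e u v -> walkn e 1 u v.
Proof. move=> h; apply/orP; right; apply/existsP; exists v; by rewrite h /= eqxx. Qed.

Lemma walkn_sym (T : finType) (e : rel T) n u v : symmetric e ->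
  walkn e n u v -> walkn e n v u.
Proof.
move=> sym; elim: n u v => [|n IH] u v /=; first by rewrite eq_sym.
case/orP=> [/eqP->|/existsP[z /andP[ez hz]]]; first by rewrite eqxx.
have := walkn_cat (IH _ _ hz) (walkn_edge (e:=e) (u:=z) (v:=u) _).
rewrite sym ez => /(_ isT); rewrite addn1 //.
Qed.

Lemma dist_walk (T : finType) (e : rel T) n u v : walkn e n u v -> dist e u v <= n.
Proof.
move=> h; rewrite /dist.
case: (ltnP n #|T|) => hn.
  rewrite leqNgt; apply/negP => lt.
  have := before_find 0 lt; rewrite nth_iota ?add0n ?h //.
by apply: leq_trans (find_size _ _) _; rewrite size_iota.
Qed.

Lemma porbit_le (T : finType) (s : {perm T}) v L :
  0 < L -> iter L s v = v -> #|porbit s v| <= L.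
Proof.
move=> L0 hL.
have sub : porbit s v \subset [set z in traject s v L].
  apply/subsetP => z /porbitP[i ->]; rewrite inE permX.
  have -> : iter i s v = iter (i %% L) s v.
    rewrite {1}(divn_eq i L) addnC iterD; congr iter.
    elim: (i %/ L) => [|q IH]; first by rewrite mul0n.
    by rewrite mulSn iterD IH hL.
  by apply/trajectP; exists (i %% L); rewrite ?ltn_pmod.
apply: leq_trans (subset_leq_card sub) _.
rewrite cardsE; apply: leq_trans (card_size _) _; by rewrite size_traject.
Qed.


Definition Lg (T : finType) (b c : T -> T) (t : T -> bool) (n : T) : {set T} :=
  if t n then [set n; b n; c n] else [set n; b n].

Record Spider (T : finType) (e : rel T) (x y : T) (N : {set T})
  (b c : T -> T) (t : T -> bool) : Prop := {
 sp_sym : symmetric e;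
 sp_irr : irreflexive e;
 sp_exy : e x y;
 sp_xN : x \notin N;
 sp_eyN : forall n, n \in N -> e y n;
 sp_xonly : forall w, e x w -> w = y;
 sp_yonly : forall w, e y w -> w = x \/ w \in N;
 sp_eb : forall n, n \in N -> e n (b n);
 sp_ec : forall n, n \in N -> t n -> e (b n) (c n);
 sp_nc : forall n, n \in N -> t n -> ~~ e n (c n);
 sp_cn : forall n, n \in N -> t n -> c n != n;
 sp_xL : forall n, n \in N -> x \notin Lg b c t n;
 sp_yL : forall n, n \in N -> y \notin Lg b c t n;
 sp_disj : forall n m v, n \in N -> m \in N -> v \in Lg b c t n -> v \in Lg b c t m -> n = m;
 sp_closed : forall n u w, n \in N -> u \in Lg b c t n -> e u w ->
     w \in Lg b c t n \/ (u = n /\ w = y);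
 sp_cover : forall v, [\/ v = x, v = y | exists2 n, n \in N & v \in Lg b c t n] }.

Section S.
Variables (T : finType) (e : rel T) (x y : T) (N : {set T}) (b c : T -> T) (t : T -> bool).
Hypothesis H : Spider e x y N b c t.
Local Notation L := (Lg b c t).

Lemma mem_a n : n \in L n. Proof. by rewrite /Lg; case: (t n); rewrite !inE eqxx. Qed.
Lemma mem_b n : b n \in L n. Proof. by rewrite /Lg; case: (t n); rewrite !inE eqxx ?orbT. Qed.
Lemma mem_c n : t n -> c n \in L n. Proof. by rewrite /Lg => ->; rewrite !inE eqxx ?orbT. Qed.

Lemma inL n v : v \in L n -> [\/ v = n, v = b n | t n /\ v = c n].
Proof.
rewrite /Lg; case: (t n); rewrite !inE.
  case/orP=> [/orP[]|]/eqP->; [by constructor 1|by constructor 2|by constructor 3].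
by case/orP=> /eqP->; [constructor 1|constructor 2].
Qed.

Lemma neq_cross n m u w : n \in N -> m \in N -> n != m -> u \in L n -> w \in L m -> u != w.
Proof.
move=> hn hm nm hu hw; apply/eqP => uw; subst w.
by move/eqP: nm; apply; exact: (sp_disj H hn hm hu hw).
Qed.

Lemma ne_cross n m u w : n \in N -> m \in N -> n != m -> u \in L n -> w \in L m -> ~~ e u w.
Proof.
move=> hn hm nm hu hw; apply/negP => euw.
case: (sp_closed H hn hu euw) => [hw'|[_ wy]].
  by move/eqP: nm; apply; exact: (sp_disj H hn hm hw' hw).
by subst w; move: (sp_yL H hm); rewrite hw.
Qed.

Lemma x_notL n v : n \in N -> v \in L n -> v != x.
Proof. by move=> hn hv; apply/eqP => vx; move: (sp_xL H hn); rewrite -vx hv. Qed.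
Lemma y_notL n v : n \in N -> v \in L n -> v != y.
Proof. by move=> hn hv; apply/eqP => vx; move: (sp_yL H hn); rewrite -vx hv. Qed.

Lemma ne_x v : v != y -> ~~ e x v.
Proof. by move=> vy; apply/negP => /(sp_xonly H) vy'; rewrite vy' eqxx in vy. Qed.
Lemma ne_x' v : v != y -> ~~ e v x.
Proof. by rewrite (sp_sym H); exact: ne_x. Qed.

Lemma b_notN n : n \in N -> b n \notin N.
Proof.
move=> hn; apply/negP => hb.
have := sp_disj H hn hb (mem_b n) (mem_a (b n)) => bn.
by move: (sp_irr H n); rewrite {2}bn (sp_eb H hn).
Qed.

Lemma c_notN n : n \in N -> t n -> c n \notin N.
Proof.
move=> hn tn; apply/negP => hc.
have := sp_disj H hn hc (mem_c tn) (mem_a (c n)) => cn.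
by move: (sp_cn H hn tn); rewrite -cn eqxx.
Qed.

Lemma ne_y v n : n \in N -> v \in L n -> v \notin N -> ~~ e y v.
Proof.
move=> hn hv vN; apply/negP => /(sp_yonly H) [vx|]; last by rewrite (negbTE vN).
by move: (x_notL hn hv); rewrite vx eqxx.
Qed.

Lemma bn_neq n : n \in N -> b n != n.
Proof. move=> hn; apply/eqP => bn; by move: (sp_irr H n); rewrite -{2}bn (sp_eb H hn). Qed.
Lemma cb_neq n : n \in N -> t n -> c n != b n.
Proof. move=> hn tn; apply/eqP => bn; by move: (sp_irr H (b n)); rewrite -{2}bn (sp_ec H hn tn). Qed.

Lemma xy_neq : x != y.
Proof. apply/eqP => xy; by move: (sp_irr H x); rewrite {2}xy (sp_exy H). Qed.

Lemma N_notx n : n \in N -> n != x.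
Proof. by move=> hn; apply/eqP => nx; move: (sp_xN H); rewrite -nx hn. Qed.
Lemma N_noty n : n \in N -> n != y.
Proof. by move=> hn; exact: (y_notL hn (mem_a n)). Qed.

Lemma w_a n : n \in N -> walkn e 1 n y.
Proof. by move=> hn; apply: walkn_edge; rewrite (sp_sym H) (sp_eyN H hn). Qed.
Lemma w_b n : n \in N -> walkn e 2 (b n) y.
Proof. move=> hn; apply: (walkn_cat (n:=1)) (w_a hn); apply: walkn_edge; by rewrite (sp_sym H) (sp_eb H hn). Qed.
Lemma w_c n : n \in N -> t n -> walkn e 3 (c n) y.
Proof. move=> hn tn; apply: (walkn_cat (n:=1)) (w_b hn); apply: walkn_edge; by rewrite (sp_sym H) (sp_ec H hn tn). Qed.
Lemma w_x : walkn e 1 x y.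
Proof. apply: walkn_edge; exact: (sp_exy H). Qed.

Lemma w_any v : walkn e 3 v y.
Proof.
case: (sp_cover H v) => [->|->|[n hn hv]].
- by apply: (walkn_mono _ w_x).
- by rewrite /= eqxx.
case: (inL hv) => [->|->|[tn ->]].
- by apply: (walkn_mono _ (w_a hn)).
- by apply: (walkn_mono _ (w_b hn)).
- exact: w_c.
Qed.

Lemma via_y i j u v : walkn e i u y -> walkn e j v y -> walkn e (i + j) u v.
Proof. move=> hu hv; apply: walkn_cat hu _; exact: walkn_sym (sp_sym H) hv. Qed.

End S.


Section C.
Variables (T : finType) (e : rel T) (x y : T) (N : {set T}) (b c : T -> T) (t : T -> bool).
Hypothesis H : Spider e x y N b c t.
Local Notation L := (Lg b c t).
Variables (odd : bool) (s1 s2 : T) (p : T -> T).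
Definition spc n := (n == s1) || (~~ odd && (n == s2)).
Hypothesis Hs1 : s1 \in N.
Hypothesis Hs2 : ~~ odd -> s2 \in N /\ s2 != s1.
Hypothesis Hp : forall n, n \in N -> ~~ spc n ->
  [/\ p n \in N, p n != n, p (p n) = n & ~~ spc (p n)].

Definition r v := odflt x [pick n in N | v \in L n].

Lemma rP n v : n \in N -> v \in L n -> r v = n.
Proof.
move=> hn hv; rewrite /r; case: pickP => [m /andP[hm hvm]|/(_ n)]; last by rewrite hn hv.
by rewrite /= (sp_disj H hm hn hvm hv).
Qed.

Definition nx := if odd then s1 else x.

Definition f v :=
 if v == x then y else if v == y then b s1 else
 let n := r v in
 if n == s1 then (if v == n then (if odd then x else s2)
                  else if v == b n then (if t n then c n else nx) else nx)
 else if ~~ odd && (n == s2) then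
   (if v == n then (if t n then c n else b n) else if v == b n then s1 else b n)
 else if t n then
   (if v == n then c n else if v == b n then (if t (p n) then b (p n) else p n) else n)
 else if t (p n) then (if v == n then b n else b (p n))
 else (if v == n then b (p n) else n).

Lemma f_x : f x = y. Proof. by rewrite /f eqxx. Qed.
Lemma f_y : f y = b s1. Proof. by rewrite /f eq_sym (negbTE (xy_neq H)) eqxx. Qed.

Lemma f_L n v : n \in N -> v \in L n -> f v =
 if n == s1 then (if v == n then (if odd then x else s2)
                  else if v == b n then (if t n then c n else nx) else nx)
 else if ~~ odd && (n == s2) then
   (if v == n then (if t n then c n else b n) else if v == b n then s1 else b n)
 else if t n then
   (if v == n then c n else if v == b n then (if t (p n) then b (p n) else p n) else n)
 else if t (p n) then (if v == n then b n else b (p n))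
 else (if v == n then b (p n) else n).
Proof.
move=> hn hv; rewrite /f (negbTE (x_notL H hn hv)) (negbTE (y_notL H hn hv)).
by rewrite (rP hn hv).
Qed.

Lemma Hs2N : ~~ odd -> s2 \in N. Proof. by case/Hs2. Qed.
Lemma s21 : ~~ odd -> (s2 == s1) = false. Proof. by case/Hs2 => _ /negbTE. Qed.

Lemma fs1a : f s1 = if odd then x else s2.
Proof. by rewrite (f_L Hs1 (mem_a _ _ _ _)) !eqxx. Qed.
Lemma fs1b : f (b s1) = if t s1 then c s1 else nx.
Proof. by rewrite (f_L Hs1 (mem_b _ _ _ _)) !eqxx (negbTE (bn_neq H Hs1)). Qed.
Lemma fs1c : t s1 -> f (c s1) = nx.
Proof.
move=> ht; rewrite (f_L Hs1 (mem_c _ _ ht)) !eqxx (negbTE (sp_cn H Hs1 ht)).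
by rewrite (negbTE (cb_neq H Hs1 ht)).
Qed.
Lemma fs2a : ~~ odd -> f s2 = if t s2 then c s2 else b s2.
Proof. move=> ho; by rewrite (f_L (Hs2N ho) (mem_a _ _ _ _)) s21 // ho !eqxx. Qed.
Lemma fs2b : ~~ odd -> f (b s2) = s1.
Proof.
move=> ho; rewrite (f_L (Hs2N ho) (mem_b _ _ _ _)) s21 // ho !eqxx.
by rewrite (negbTE (bn_neq H (Hs2N ho))).
Qed.
Lemma fs2c : ~~ odd -> t s2 -> f (c s2) = b s2.
Proof.
move=> ho ht; rewrite (f_L (Hs2N ho) (mem_c _ _ ht)) s21 // ho !eqxx.
by rewrite (negbTE (sp_cn H (Hs2N ho) ht)) (negbTE (cb_neq H (Hs2N ho) ht)).
Qed.

Lemma spcE n : spc n = false -> ((n == s1) = false) * ((~~ odd && (n == s2)) = false).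
Proof. by rewrite /spc; case: (n == s1) => //= ->. Qed.

Lemma fpa n : n \in N -> ~~ spc n ->
  f n = if t n then c n else if t (p n) then b n else b (p n).
Proof.
move=> hn /negbTE hs; rewrite (f_L hn (mem_a _ _ _ _)) !(spcE hs) !eqxx.
by case: (t n); case: (t (p n)).
Qed.
Lemma fpb n : n \in N -> ~~ spc n ->
  f (b n) = if t n then (if t (p n) then b (p n) else p n)
            else if t (p n) then b (p n) else n.
Proof.
move=> hn /negbTE hs; rewrite (f_L hn (mem_b _ _ _ _)) !(spcE hs) !eqxx.
by rewrite (negbTE (bn_neq H hn)); case: (t n); case: (t (p n)).
Qed.
Lemma fpc n : n \in N -> ~~ spc n -> t n -> f (c n) = n.
Proof.
move=> hn /negbTE hs ht; rewrite (f_L hn (mem_c _ _ ht)) !(spcE hs) ht.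
by rewrite (negbTE (sp_cn H hn ht)) (negbTE (cb_neq H hn ht)).
Qed.


Lemma spc1 : spc s1. Proof. by rewrite /spc eqxx. Qed.
Lemma spc2 : ~~ odd -> spc s2. Proof. by move=> ho; rewrite /spc ho eqxx orbT. Qed.

Lemma pn1 n : ~~ spc n -> n != s1.
Proof. by apply: contra => /eqP->; exact: spc1. Qed.
Lemma pn2 n : ~~ spc n -> ~~ odd -> n != s2.
Proof. by move=> h ho; apply: contra h => /eqP->; exact: spc2. Qed.

Ltac memT := solve [exact: mem_a | exact: mem_b | (apply: mem_c; assumption)].

Lemma K0 : ~~ e (f x) (f y).
Proof. rewrite f_x f_y; apply: (ne_y H Hs1); [exact: mem_b | exact: (b_notN H Hs1)]. Qed.

Lemma K1 n : n \in N -> ~~ e (f y) (f n).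
Proof.
move=> hn; rewrite f_y.
have hb1 : b s1 \in L s1 by exact: mem_b.
case: (boolP (n == s1)) => [/eqP->|n1].
  rewrite fs1a; case: (boolP odd) => ho.
    by apply: (ne_x' H); exact: (y_notL H Hs1 hb1).
  have [h2 h21] := Hs2 ho.
  by apply: (ne_cross H Hs1 h2 _ hb1 (mem_a _ _ _ _)); rewrite eq_sym.
case: (boolP (~~ odd && (n == s2))) => [/andP[ho /eqP->]|n2].
  have [h2 h21] := Hs2 ho; rewrite eq_sym in h21.
  rewrite fs2a //; case ht: (t s2); apply: (ne_cross H Hs1 h2 h21 hb1); memT.
have hs : ~~ spc n by rewrite /spc negb_or n1 n2.
have [hm mn pm hsm] := Hp hn hs.
rewrite fpa //; case ht: (t n); last case: (t (p n)).
- by apply: (ne_cross H Hs1 hn _ hb1); [rewrite eq_sym | memT].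
- by apply: (ne_cross H Hs1 hn _ hb1); [rewrite eq_sym | memT].
- by apply: (ne_cross H Hs1 hm _ hb1); [rewrite eq_sym; exact: pn1 | memT].
Qed.

Lemma role n : [\/ n = s1, ~~ odd /\ n = s2 | ~~ spc n].
Proof.
rewrite /spc; case: (boolP (n == s1)) => [/eqP->|_]; first by constructor 1.
case: (boolP odd) => ho /=; first by constructor 3.
case: (boolP (n == s2)) => [/eqP->|_]; [by constructor 2 | by constructor 3].
Qed.

Lemma K2 n : n \in N -> ~~ e (f n) (f (b n)).
Proof.
move=> hn; case: (role n) => [->|[ho ->]|hs].
- rewrite fs1a fs1b /nx; case: (boolP odd) => ho.
    apply: (ne_x H); case ht: (t s1).
      exact: (y_notL H Hs1 (mem_c _ _ ht)).
    exact: (N_noty H Hs1).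
  have [h2 h21] := Hs2 ho.
  case ht: (t s1).
    by apply: (ne_cross H h2 Hs1 h21); memT.
  by apply: (ne_x' H); exact: (N_noty H h2).
- have [h2 h21] := Hs2 ho.
  rewrite fs2a // fs2b //; case ht: (t s2); apply: (ne_cross H h2 Hs1 h21); memT.
- have [hm mn pm hsm] := Hp hn hs.
  have nm : n != p n by rewrite eq_sym.
  rewrite fpa // fpb //; case ht: (t n); case htm: (t (p n)).
  + by apply: (ne_cross H hn hm nm); memT.
  + by apply: (ne_cross H hn hm nm); memT.
  + by apply: (ne_cross H hn hm nm); memT.
  + by apply: (ne_cross H hm hn mn); memT.
Qed.

Lemma K3 n : n \in N -> t n -> ~~ e (f (b n)) (f (c n)).
Proof.
move=> hn ht; case: (role n) => [hn1|[ho hn2]|hs].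
- subst n; rewrite fs1b fs1c // ht /nx; case: (boolP odd) => ho.
    by rewrite (sp_sym H); exact: (sp_nc H Hs1 ht).
  by apply: (ne_x' H); exact: (y_notL H Hs1 (mem_c _ _ ht)).
- subst n; have [h2 h21] := Hs2 ho.
  rewrite fs2b // fs2c //; apply: (ne_cross H Hs1 h2); [by rewrite eq_sym | memT | memT].
- have [hm mn pm hsm] := Hp hn hs.
  rewrite fpb // fpc // ht; case htm: (t (p n)); apply: (ne_cross H hm hn mn); memT.
Qed.

Lemma f_2p u v : e u v -> ~~ e (f u) (f v).
Proof.
have sym := sp_sym H.
have symn a1 a2 : ~~ e (f a2) (f a1) -> ~~ e (f a1) (f a2) by rewrite sym.
have yN n : n \in N -> ~~ e (f n) (f y) by move=> hn; apply: symn; exact: K1.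
case: (sp_cover H u) => [->|->|[n hn hu]] euv.
- by rewrite (sp_xonly H euv); exact: K0.
- case: (sp_yonly H euv) => [->|hv]; [exact: symn K0 | exact: K1].
case: (sp_closed H hn hu euv) => [hv|[-> ->]]; last exact: yN.
have irr := sp_irr H.
move: euv; case: (inL hu) => [->|->|[ht ->]]; case: (inL hv) => [->|->|[ht' ->]];
  rewrite ?irr // => euv.
- exact: K2.
- by rewrite (negbTE (sp_nc H hn ht')) in euv.
- exact: symn (K2 hn).
- exact: K3.
- by rewrite sym (negbTE (sp_nc H hn ht)) in euv.
- exact: symn (K3 hn ht).
Qed.

Lemma near_via i j u v : walkn e i u y -> walkn e j v y -> i + j <= 4 -> walkn e 4 u v.
Proof. move=> hu hv le; apply: (walkn_mono le); exact: (via_y H hu hv). Qed.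

Lemma near_edge u v : e u v -> walkn e 4 u v.
Proof. by move=> h; apply: (walkn_mono (n:=1)) => //; exact: walkn_edge. Qed.

Lemma w_y : walkn e 0 y y. Proof. by rewrite /= eqxx. Qed.

Lemma f_near v : walkn e 4 v (f v).
Proof.
have wa := w_a H; have wb := w_b H; have wc := w_c H; have wx := w_x H.
case: (sp_cover H v) => [->|->|[n hn hv]].
- by rewrite f_x; apply: (near_via wx w_y).
- by rewrite f_y; apply: (near_via w_y (wb _ Hs1)).
case: (inL hv) => [->|->|[ht ->]]; case: (role n) => [hn1|[ho hn2]|hs]; subst.
- by rewrite fs1a; case ho: odd; [apply: (near_via (wa _ Hs1) wx) | apply: (near_via (wa _ Hs1) (wa _ (Hs2N (negbT ho))))].
- by rewrite fs2a //; case ht: (t s2); [apply: (near_via (wa _ (Hs2N ho)) (wc _ _ ht)) | apply: (near_via (wa _ (Hs2N ho)) (wb _ _))].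
- have [hm mn pm hsm] := Hp hn hs.
  rewrite fpa //; case ht: (t n); last case htm: (t (p n)).
  + exact: (near_via (wa _ hn) (wc _ hn ht)).
  + exact: (near_via (wa _ hn) (wb _ hn)).
  + exact: (near_via (wa _ hn) (wb _ hm)).
- rewrite fs1b /nx; case ht: (t s1); first by apply: near_edge; exact: (sp_ec H Hs1 ht).
  by case: odd; [apply: (near_via (wb _ Hs1) (wa _ Hs1)) | apply: (near_via (wb _ Hs1) wx)].
- by rewrite fs2b //; apply: (near_via (wb _ (Hs2N ho)) (wa _ Hs1)).
- have [hm mn pm hsm] := Hp hn hs.
  rewrite fpb //; case ht: (t n); case htm: (t (p n)).
  + exact: (near_via (wb _ hn) (wb _ hm)).
  + exact: (near_via (wb _ hn) (wa _ hm)).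
  + exact: (near_via (wb _ hn) (wb _ hm)).
  + exact: (near_via (wb _ hn) (wa _ hn)).
- rewrite fs1c // /nx.
  by case: odd; [apply: (near_via (wc _ Hs1 ht) (wa _ Hs1)) | apply: (near_via (wc _ Hs1 ht) wx)].
- rewrite fs2c //; apply: near_edge; rewrite (sp_sym H); exact: (sp_ec H (Hs2N ho) ht).
- rewrite fpc //; exact: (near_via (wc _ hn ht) (wa _ hn)).
Qed.

Lemma f_nofix v : f v != v.
Proof.
have nc m u w : m \in N -> ~~ spc m -> u \in L m -> w \in L (p m) -> w != u.
  move=> hm hs hu hw; have [hpm mn _ _] := Hp hm hs.
  by apply: (neq_cross H hpm hm mn hw hu).
case: (sp_cover H v) => [->|->|[n hn hv]].
- by rewrite f_x eq_sym (xy_neq H).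
- by rewrite f_y; exact: (y_notL H Hs1 (mem_b _ _ _ _)).
case: (inL hv) => [->|->|[ht ->]]; case: (role n) => [hn1|[ho hn2]|hs]; subst.
- rewrite fs1a; case ho: odd; first by rewrite eq_sym (N_notx H Hs1).
  by have [_ ] := Hs2 (negbT ho).
- by rewrite fs2a //; case ht: (t s2); [exact: (sp_cn H (Hs2N ho) ht) | exact: (bn_neq H (Hs2N ho))].
- rewrite fpa //; case ht: (t n); last case htm: (t (p n)).
  + exact: (sp_cn H hn ht).
  + exact: (bn_neq H hn).
  + by apply: (nc n) => //; memT.
- rewrite fs1b /nx; case ht: (t s1); first exact: (cb_neq H Hs1 ht).
  case: odd; first by rewrite eq_sym (bn_neq H Hs1).
  by rewrite eq_sym (x_notL H Hs1 (mem_b _ _ _ _)).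
- rewrite fs2b //; have [h2 h21] := Hs2 ho.
  by apply: (neq_cross H Hs1 h2); [rewrite eq_sym | memT | memT].
- rewrite fpb //; case ht: (t n); case htm: (t (p n)).
  + by apply: (nc n) => //; memT.
  + by apply: (nc n) => //; memT.
  + by apply: (nc n) => //; memT.
  + by rewrite eq_sym (bn_neq H hn).
- rewrite fs1c // /nx; case: odd; first by rewrite eq_sym (sp_cn H Hs1 ht).
  by rewrite eq_sym (x_notL H Hs1 (mem_c _ _ ht)).
- by rewrite fs2c // eq_sym (cb_neq H (Hs2N ho) ht).
- by rewrite fpc // eq_sym (sp_cn H hn ht).
Qed.

Definition cyc v := exists2 k, 0 < k <= 5 & iter k f v = v.

Lemma cyc_f v : cyc v -> cyc (f v).
Proof. by case=> k hk hv; exists k => //; rewrite -iterSr iterS hv. Qed.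

Lemma cyc_x : cyc x.
Proof.
rewrite /cyc; case ho: odd; case ht: (t s1).
- exists 5 => //=; rewrite f_x f_y fs1b ht fs1c // /nx ho fs1a ho //.
- exists 4 => //=; rewrite f_x f_y fs1b ht /nx ho fs1a ho //.
- exists 4 => //=; rewrite f_x f_y fs1b ht fs1c // /nx ho //.
- exists 3 => //=; rewrite f_x f_y fs1b ht /nx ho //.
Qed.

Lemma cyc_s1e : ~~ odd -> cyc s1.
Proof.
move=> ho; rewrite /cyc; case ht: (t s2).
- exists 4 => //=; rewrite fs1a (negbTE ho) fs2a // ht fs2c // fs2b //.
- exists 3 => //=; rewrite fs1a (negbTE ho) fs2a // ht fs2b //.
Qed.

Lemma cyc_pair n : n \in N -> ~~ spc n -> cyc n /\ cyc (b n).
Proof.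
move=> hn hs; have [hm mn pm hsm] := Hp hn hs.
have fma := fpa hm hsm; have fmb := fpb hm hsm; rewrite pm in fma fmb.
case ht: (t n); case htm: (t (p n)).
- split; first by exists 2 => //=; rewrite (fpa hn hs) ht fpc //.
  by exists 2 => //=; rewrite (fpb hn hs) ht htm fmb htm ht.
- split; first by exists 2 => //=; rewrite (fpa hn hs) ht fpc //.
  by exists 3 => //=; rewrite (fpb hn hs) ht htm fma htm ht fmb htm ht.
- suff cn : cyc n by split => //; move: (cyc_f cn); rewrite (fpa hn hs) ht htm.
  by exists 3 => //=; rewrite (fpa hn hs) ht htm (fpb hn hs) ht htm fmb htm ht.
- suff cn : cyc n.
    split => //; move: (cyc_f (cyc_f (cyc_f cn))).
    by rewrite (fpa hn hs) ht htm fmb htm ht fma htm ht.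
  by exists 4 => //=; rewrite (fpa hn hs) ht htm fmb htm ht fma htm ht (fpb hn hs) ht htm.
Qed.

Lemma f_cyc v : cyc v.
Proof.
have cy : cyc y by move: (cyc_f cyc_x); rewrite f_x.
have cb1 : cyc (b s1) by move: (cyc_f cy); rewrite f_y.
case: (sp_cover H v) => [->|->|[n hn hv]]; first exact: cyc_x; first exact: cy.
case: (inL hv) => [->|->|[ht ->]]; case: (role n) => [hn1|[ho hn2]|hs]; subst.
- case ho: odd; last exact: cyc_s1e (negbT ho).
  move: (cyc_f cb1); rewrite fs1b /nx ho; case ht: (t s1) => // cc.
  by move: (cyc_f cc); rewrite fs1c // /nx ho.
- by move: (cyc_f (cyc_s1e ho)); rewrite fs1a (negbTE ho).
- by case: (cyc_pair hn hs).
- exact: cb1.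
- have c2 : cyc s2 by move: (cyc_f (cyc_s1e ho)); rewrite fs1a (negbTE ho).
  move: (cyc_f c2); rewrite fs2a //; case ht: (t s2) => // cc.
  by move: (cyc_f cc); rewrite fs2c.
- by case: (cyc_pair hn hs).
- by move: (cyc_f cb1); rewrite fs1b ht.
- have c2 : cyc s2 by move: (cyc_f (cyc_s1e ho)); rewrite fs1a (negbTE ho).
  by move: (cyc_f c2); rewrite fs2a // ht.
- by case: (cyc_pair hn hs) => cn _; move: (cyc_f cn); rewrite fpa // ht.
Qed.

Lemma iter_mulP k q u : iter k f u = u -> iter (q * k) f u = u.
Proof. by move=> h; elim: q => [|q IH] //; rewrite mulSn iterD IH h. Qed.

Lemma f_inj : injective f.
Proof.
move=> u v fuv; have [k1 /andP[k10 _] h1] := f_cyc u; have [k2 /andP[k20 _] h2] := f_cyc v.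
have e1 := iter_mulP k2 h1; have e2 := iter_mulP k1 h2.
rewrite mulnC in e2.
have : (k2 * k1) = (k2 * k1).-1.+1 by rewrite prednK // muln_gt0 k10 k20.
move=> eq; rewrite eq iterSr fuv -iterSr -eq e2 in e1; by [].
Qed.

Lemma spider_main : exists s : {perm T}, well_two_placement e x s.
Proof.
exists (perm f_inj); split; [|split; [|split; [|split; [|split; [|split]]]]].
- by move=> v; rewrite permE; exact: f_nofix.
- by move=> a a' ea; rewrite !permE; exact: f_2p.
- move=> a a' _; apply: dist_walk; apply: (via_y H (w_any H _) (w_any H _)).
- rewrite permE f_x; apply: dist_walk; apply: (walkn_mono (n:=1)) => //; exact: (w_x H).
- move=> w /(sp_xonly H) ->; rewrite permE f_y; apply: dist_walk.
  apply: (walkn_mono (n:=2)) => //; apply: (walkn_sym (sp_sym H)); exact: (w_b H Hs1).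
- by move=> w _; rewrite permE; apply: dist_walk; exact: f_near.
- move=> v; have [k /andP[k0 k5] hk] := f_cyc v.
  apply: leq_trans k5; apply: porbit_le => //.
  suff -> : iter k (perm f_inj) v = iter k f v by [].
  by elim: (k) => //= j ->; rewrite permE.
Qed.

End C.


Lemma oddE n : n = odd n + n./2 * 2.
Proof. by rewrite muln2 odd_double_half. Qed.

Lemma pairing (T : finType) (N : {set T}) (d : T) : 1 < #|N| ->
  exists ok s1 s2 (p : T -> T), [/\ s1 \in N, (~~ ok -> s2 \in N /\ s2 != s1) &
   forall n, n \in N -> ~~ spc ok s1 s2 n ->
     [/\ p n \in N, p n != n, p (p n) = n & ~~ spc ok s1 s2 (p n)]].
Proof.
move=> N2.
pose l := enum N.
have ul : uniq l by exact: enum_uniq.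
have memN z : (z \in l) = (z \in N) by rewrite mem_enum.
move lk : (size l) => k.
have kE : k = #|N| by rewrite -lk cardE.
have [sh [hsh1 hsh2]] : exists sh, (odd k -> sh = 1) /\ (~~ odd k -> sh = 2).
  by case: (odd k); [exists 1|exists 2].
have hk := oddE k.
have hks : odd (k - sh) = false.
  case ok: (odd k); [rewrite hsh1 // | rewrite hsh2 ?ok //]; rewrite oddB ?ok //; lia.
have hks' := oddE (k - sh); rewrite hks in hks'.
have shb : 1 <= sh <= 2 by case ok: (odd k); [rewrite hsh1 | rewrite hsh2 ?ok].
pose tr i := if odd (i - sh) then i.-1 else i.+1.
pose p z := nth d l (tr (index z l)).
exists (odd k), (nth d l 0), (nth d l 1), p.
have nthN i : i < k -> nth d l i \in N by move=> hi; rewrite -memN mem_nth ?lk.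
have spcE i : i < k -> spc (odd k) (nth d l 0) (nth d l 1) (nth d l i) = (i < sh).
  move=> hi; have h0 : 0 < k by lia. have h1 : 1 < k by lia.
  rewrite /spc !nth_uniq ?lk //.
  case ok: (odd k); [rewrite hsh1 // | rewrite hsh2 ?ok //];
  case: i hi => [|[|i]] //.
split.
- by apply: nthN; lia.
- move=> hok; split; first by apply: nthN; lia.
  by rewrite nth_uniq ?lk //; lia.
move=> n hn hs.
have hi : index n l < k by rewrite -lk index_mem memN.
have hn' : nth d l (index n l) = n by rewrite nth_index ?memN.
move ie : (index n l) => i in hi hn'.
rewrite -hn' spcE // -leqNgt in hs.
have trP j : sh <= j < k -> sh <= tr j < k /\ tr (tr j) = j.
  case/andP=> h1 h2.
  have hj := oddE (j - sh).
  rewrite /tr; case oj: (odd (j - sh)); rewrite oj in hj.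
  + have hj' := oddE (j.-1 - sh); case oj': (odd (j.-1 - sh)); rewrite oj' in hj'.
    * exfalso; lia.
    * split; first lia. have -> : j.-1.+1 = j by lia. by [].
  + have hj' := oddE (j.+1 - sh); case oj': (odd (j.+1 - sh)); rewrite oj' in hj'.
    * by split; lia.
    * exfalso; lia.
have [/andP[t1 t2] ttr] : sh <= tr i < k /\ tr (tr i) = i by apply: trP; rewrite hs hi.
have ip : index (p n) l = tr i by rewrite /p ie index_uniq ?lk.
split.
- by rewrite /p ie; apply: nthN.
- rewrite /p ie -hn' nth_uniq ?lk //; apply/eqP => eqi.
  by move: eqi; rewrite /tr; case: (odd _); lia.
- by rewrite /p ip ttr hn'.
- by rewrite /p ie spcE // -leqNgt.
Qed.


Lemma leg_of (T : finType) (e : rel T) n y : symmetric e ->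
  neighbor_F_tree e n y -> #|subtree e n y| != 1 ->
  exists bb cc (tt : bool),
   [/\ (if tt then [set n; bb; cc] else [set n; bb]) = subtree e n y, e n bb,
       (tt -> e bb cc), (tt -> ~~ e n cc) & (tt -> cc != n)].
Proof.
move=> sym [s [us ssub hadj ss3 hend]] card1.
have ns : n \in s by rewrite ssub inE connect0.
have cs : #|subtree e n y| = size s.
  by rewrite -(eq_card ssub); apply/card_uniqP.
rewrite cs in card1.
clear cs; case: s us ssub hadj ss3 hend ns card1 => [|u [|v [|w [|z s]]]] //= us ssub hadj ss3 hend ns card1.
- move: us; rewrite /= inE andbT => uv.
  have euv : e u v.
    by rewrite hadj ?inE ?eqxx ?orbT // /adj_in /= inE eqxx.
  move: ns; rewrite !inE => /orP[]/eqP nE; subst n.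
  + exists v, u, false; split => //; apply/setP => z; by rewrite -ssub !inE.
  + exists u, u, false; split => //; first by apply/setP => z; rewrite -ssub !inE orbC.
    by rewrite sym.
- move: us; rewrite /= !inE !negb_or andbT => /andP[/andP[uv uw] vw].
  have euv : e u v by rewrite hadj ?inE ?eqxx ?orbT // /adj_in /= !inE eqxx.
  have evw : e v w by rewrite hadj ?inE ?eqxx ?orbT // /adj_in /= !inE eqxx ?orbT.
  have nuw : ~~ e u w.
    rewrite hadj ?inE ?eqxx ?orbT // /adj_in /= !inE !xpair_eqE.
    by rewrite !eqxx /= (eq_sym w v) (negbTE vw) (negbTE uv) (eq_sym w u) (negbTE uw).
  case: (hend erefl) => /= nE; subst n.
  + exists v, w, true; split; [|done|by move=> _|by move=> _|by move=> _; rewrite eq_sym].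
    by apply/setP => z; rewrite -ssub !inE -orbA.
  + exists v, u, true; split; [|by rewrite sym|by move=> _; rewrite sym|by move=> _; rewrite sym|by move=> _].
    apply/setP => z; rewrite -ssub !inE.
    by case: (z == u); case: (z == v); case: (z == w).
Qed.

Lemma extract (T : finType) (e : rel T) (x y : T) :
  is_tree e -> e x y -> deg e x = 1 -> 3 <= deg e y ->
  (forall y', e y y' -> y' != x ->
     neighbor_F_tree e y' y /\ #|subtree e y' y| != 1) ->
  exists N b c t, Spider e x y N b c t.
Proof.
case=> [[sym irr] conn _] exy dx dy hyp.
pose N := [set z | e y z & z != x].
have hNx : x \notin N by rewrite inE eqxx andbF.
have xy : x != y by apply/eqP => h; move: (irr x); rewrite {2}h exy.
have N2 : 1 < #|N|.
  move: dy; rewrite /deg (cardsD1 x) inE sym exy.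
  have -> : [set z | e y z] :\ x = N by apply/setP => z; rewrite !inE andbC.
  by [].
have xonly w : e x w -> w = y.
  move=> ew; move: dx; rewrite /deg => /eqP/cards1P[z hz].
  have : y \in [set z | e x z] by rewrite inE.
  have : w \in [set z | e x z] by rewrite inE.
  by rewrite hz !inE => /eqP-> /eqP->.
have Ne n : n \in N -> e y n /\ n != x by rewrite inE => /andP.
have Ny n : n \in N -> n != y.
  by move=> /Ne[h _]; apply/eqP => ny; move: (irr y); rewrite -{2}ny h.
pose sub n := subtree e n y.
have subcl n u w : u \in sub n -> remove_edge e n y u w -> w \in sub n.
  rewrite !inE => hu hw; apply: connect_trans hu _; exact: connect1.
have nsub n : n \in sub n by rewrite inE connect0.
have card3 n : n \in N -> #|sub n| <= 3.
  move=> hn; have [hy hx] := Ne n hn; have [[s [us ssub _ ss3 _]] _] := hyp n hy hx.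
  by rewrite -(eq_card ssub); move/card_uniqP: us => ->.
have ysub n : n \in N -> y \notin sub n.
  move=> hn; apply/negP => ys.
  have [hy hx] := Ne n hn.
  have : 0 < #|N :\ n| by rewrite (cardsD1 n) hn in N2.
  case/card_gt0P => n' /setD1P[n'n hn'].
  have [hy' hx'] := Ne n' hn'.
  have xs : x \in sub n.
    apply: (subcl _ _ _ ys); rewrite /remove_edge sym exy /=.
    by rewrite eqxx (eq_sym y n) (negbTE (Ny n hn)) (eq_sym x n) (negbTE hx).
  have n's : n' \in sub n.
    apply: (subcl _ _ _ ys); rewrite /remove_edge hy' /=.
    by rewrite eqxx (eq_sym y n) (negbTE (Ny n hn)) (negbTE n'n).
  have hu : uniq [:: y; x; n; n'].
    rewrite /= !inE !negb_or eq_sym xy eq_sym (Ny n hn) eq_sym (Ny n' hn') eq_sym hx.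
    by rewrite eq_sym hx' eq_sym n'n.
  have hs : {subset [:: y; x; n; n'] <= enum (sub n)}.
    by move=> z; rewrite mem_enum !in_cons in_nil orbF => /or4P[]/eqP->.
  have := uniq_leq_size hu hs; rewrite -cardE /= => h4; by move: (leq_trans h4 (card3 n hn)).
have xsub n : n \in N -> x \notin sub n.
  move=> hn; apply/negP => xs; move: (ysub n hn); rewrite (subcl _ _ _ xs) //.
  rewrite /remove_edge exy /= eqxx (negbTE xy) /= orbF andbT eq_sym; by have [_ ->] := Ne n hn.
have cl n u w : n \in N -> u \in sub n -> e u w -> w != y -> w \in sub n.
  move=> hn hu euw wy; apply: (subcl _ _ _ hu); rewrite /remove_edge euw (negbTE wy) andbF /=.
  by apply/negP => /andP[/eqP uy _]; move: (ysub n hn); rewrite -uy hu.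
have clN n u : n \in N -> u \in sub n -> e u y -> u = n.
  move=> hn hu euy; case: (boolP (u == n)) => [/eqP //|un].
  move: (ysub n hn); rewrite (subcl _ _ _ hu) //.
  rewrite /remove_edge euy (negbTE un) /=.
  by apply/negP => /andP[/eqP uy _]; move: (ysub n hn); rewrite -uy hu.
have legs n : exists bct : T * T * bool, n \in N ->
   [/\ (if bct.2 then [set n; bct.1.1; bct.1.2] else [set n; bct.1.1]) = sub n,
       e n bct.1.1, (bct.2 -> e bct.1.1 bct.1.2), (bct.2 -> ~~ e n bct.1.2)
     & (bct.2 -> bct.1.2 != n)].
  case: (boolP (n \in N)) => hn; last by exists (n, n, false).
  have [hy hx] := Ne n hn; have [F C] := hyp n hy hx.
  have [bb [cc [tt HL]]] := leg_of sym F C.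
  by exists (bb, cc, tt).
have [F HF] := fin_all_exists legs.
pose b n := (F n).1.1; pose c n := (F n).1.2; pose t n := (F n).2.
have LgE n : n \in N -> Lg b c t n = sub n by move=> hn; case: (HF n hn).
exists N, b, c, t.
have disj n m v : n \in N -> m \in N -> v \in sub n -> v \in sub m -> n = m.
  move=> hn hm hvn hvm.
  have [_ ebm ecm _ _] := HF m hm.
  have ms : m \in sub n.
    move: hvm; rewrite -(LgE m hm) => /inL [vm|vb|[tm vc]]; subst v.
    - by [].
    - apply: (cl n (b m)) => //; first by rewrite sym.
      exact: Ny.
    - have bs : b m \in sub n.
        apply: (cl n (c m)) => //; first by rewrite sym; exact: ecm.
        apply/eqP => by'; move: (ysub m hm); rewrite -by' -(LgE m hm); by rewrite mem_b.
      apply: (cl n (b m)) => //; first by rewrite sym.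
      exact: Ny.
  apply: esym; apply: (clN n m hn ms); rewrite sym; by case: (Ne m hm).
split => //.
- by move=> n hn; case: (Ne n hn).
- by move=> w ew; case: (boolP (w == x)) => [/eqP->|wx]; [left|right; rewrite inE ew wx].
- by move=> n hn; case: (HF n hn).
- by move=> n hn; case: (HF n hn).
- by move=> n hn; case: (HF n hn).
- by move=> n hn; case: (HF n hn).
- by move=> n hn; rewrite LgE //; exact: xsub.
- by move=> n hn; rewrite LgE //; exact: ysub.
- by move=> n m v hn hm; rewrite !LgE //; exact: disj.
- move=> n u w hn; rewrite LgE // => hu euw.
  case: (boolP (w == y)) => [/eqP wy|wy]; last by left; exact: cl hu euw wy.
  by right; split => //; apply: (clN n u hn hu); rewrite -wy.
- move=> v.
  pose U v := (v == x) || (v == y) || [exists n, (n \in N) && (v \in sub n)].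
  have step u w : U u -> e u w -> U w.
    rewrite /U /= => /orP[/orP[/eqP->|/eqP->]|/existsP[n /andP[hn hu]]] ew.
    + by rewrite (xonly w ew) eqxx orbT.
    + case: (boolP (w == x)) => [/eqP->|wx]; first by [].
      apply/orP; right; apply/existsP; exists w; rewrite nsub inE ew wx //.
    + case: (boolP (w == y)) => [_|wy]; first by rewrite orbT.
      apply/orP; right; apply/existsP; exists n; rewrite hn; exact: cl hu ew wy.
  have gen pth : forall u, U u -> path e u pth -> U (last u pth).
    elim: pth => [|z pth IH] u hu //=.
    case/andP=> euz hp; exact: (IH z (step _ _ hu euz) hp).
  have : U v.
    case/connectP: (conn y v) => pth hp ->.
    apply: gen hp; by rewrite /U eqxx orbT.
  rewrite /U => /orP[/orP[/eqP->|/eqP->]|/existsP[n /andP[hn hv]]].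
  + by constructor 1.
  + by constructor 2.
  + by constructor 3; exists n => //; rewrite LgE.
Qed.

Theorem lemma3p8 (T : finType) (e : rel T) (x y : T) :
  is_tree e -> ~ is_star e ->
  e x y -> deg e x = 1 -> 3 <= deg e y ->
  (forall y', e y y' -> y' != x ->
     neighbor_F_tree e y' y /\ #|subtree e y' y| != 1) ->
  exists s : {perm T}, well_two_placement e x s.
Proof.
move=> tr _ exy dx dy hyp.
have [N [b [c [t H]]]] := extract tr exy dx dy hyp.
have N2 : 1 < #|N|.
  have sub : [set z | e y z] \subset x |: N.
    apply/subsetP => z; rewrite !inE => /(sp_yonly H) [->|->]; by rewrite ?eqxx ?orbT.
  move: (subset_leq_card sub) (cardsU1 x N); rewrite -/(deg e y) (negbTE (sp_xN H)) /= => h1 h2.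
  by move: (leq_trans dy h1); rewrite h2.
have [ok [s1 [s2 [p [hs1 hs2 hp]]]]] := pairing x N2.
exact: (spider_main H hs1 hs2 hp).
Qed.
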